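(* Fix $d\ge1$, $N\ge1$, $\alpha\ge2$, powers $P_s,P_r>0$, gains $\xi_{u,v}>0$, and positions $\mathbf{s},\mathbf{1},\dots,\mathbf{N}\in\mathbb{R}^d$ with $\mathbf{s}\neq\mathbf{j}$ for all $j$. For a relay position $\mathbf{r}\in\mathbb{R}^d$ let $\mathsf{SNR}_{u,v}=\xi_{u,v}P_u/\|\mathbf{u}-\mathbf{v}\|^{\alpha}$ for $(u,v)\in\{(s,r),(s,j),(r,j)\}$ (an SNR being $+\infty$ when the distance is $0$). With $\mathsf{C}(x)=\tfrac12\log(1+x)$, $f_j(\rho,\mathbf{r})=\mathsf{SNR}_{s,j}+\mathsf{SNR}_{r,j}+2\rho\sqrt{\mathsf{SNR}_{s,j}\mathsf{SNR}_{r,j}}$, $g_j(\rho,\mathbf{r})=(1-\rho^2)(\mathsf{SNR}_{s,j}+\mathsf{SNR}_{s,r})$ and $$R_{CS}(\rho,\mathbf{r})=\min_{1\le j\le N}\min\big(\mathsf{C}(f_j(\rho,\mathbf{r})),\mathsf{C}(g_j(\rho,\mathbf{r}))\big),$$ $R_{CS}(\rho,\mathbf{r})$ is quasi-concave in $\mathbf{r}\in\mathbb{R}^d$ for every fixed $\rho\in[0,1]$.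
   Context: Setting: real AWGN multicast relay channel (cut-set bound) with source $s$, relay at position $\mathbf{r}$, destinations $1,\dots,N$, path-loss exponent $\alpha$ and channel gains $a_{u,v}=\sqrt{\xi_{u,v}}/\|\mathbf{u}-\mathbf{v}\|^{\alpha/2}$; $\rho$ is the source–relay input correlation coefficient. A function $F$ (possibly taking value $+\infty$) on a convex set is quasi-concave if $F(\lambda x_1+(1-\lambda)x_2)\ge\min(F(x_1),F(x_2))$ for all $x_1,x_2$ and $\lambda\in[0,1]$. *)

(* Defs.v *)
From HB Require Import structures.
From mathcomp Require Import all_boot all_order all_algebra.
From mathcomp Require Import all_classical all_reals all_analysis.
Set Implicit Arguments. Unset Strict Implicit. Unset Printing Implicit Defensive.
Import Order.TTheory GRing.Theory Num.Theory.
Local Open Scope ring_scope.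

Definition edist (R : realType) (d : nat) (u v : 'rV[R]_d) : R :=
  Num.sqrt (\sum_(i < d) (u ord0 i - v ord0 i) ^+ 2).

Definition SNR (R : realType) (d : nat) (alpha xi P : R) (u v : 'rV[R]_d) : \bar R :=
  if edist u v == 0 then +oo%E else (xi * P / (edist u v `^ alpha))%:E.

Definition esqrt (R : realType) (x : \bar R) : \bar R :=
  match x with
  | r%:E => (Num.sqrt r)%:E
  | +oo%E => +oo%E
  | -oo%E => 0%E
  end.

Definition Ccap (R : realType) (x : \bar R) : \bar R :=
  match x with
  | r%:E => (ln (1 + r) / 2)%:E
  | +oo%E => +oo%E
  | -oo%E => -oo%E
  end.

Section CutSet.
Local Open Scope ereal_scope.
Variables (R : realType) (d N : nat) (alpha Ps Pr xi_sr : R)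
  (xi_sj xi_rj : 'I_N -> R) (s : 'rV[R]_d) (dst : 'I_N -> 'rV[R]_d).

Definition SNR_sr (r : 'rV[R]_d) := SNR alpha xi_sr Ps s r.
Definition SNR_sj (j : 'I_N) := SNR alpha (xi_sj j) Ps s (dst j).
Definition SNR_rj (r : 'rV[R]_d) (j : 'I_N) := SNR alpha (xi_rj j) Pr r (dst j).

Definition f_j (rho : R) (r : 'rV[R]_d) (j : 'I_N) : \bar R :=
  SNR_sj j + SNR_rj r j + (2 * rho)%:E * esqrt (SNR_sj j * SNR_rj r j).

Definition g_j (rho : R) (r : 'rV[R]_d) (j : 'I_N) : \bar R :=
  (1 - rho ^+ 2)%:E * (SNR_sj j + SNR_sr r).

Definition R_CS (rho : R) (r : 'rV[R]_d) : \bar R :=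
  \big[Order.min/+oo]_(j < N) Order.min (Ccap (f_j rho r j)) (Ccap (g_j rho r j)).
End CutSet.

Definition quasi_concave (R : realType) (d : nat) (F : 'rV[R]_d -> \bar R) : Prop :=
  forall (x1 x2 : 'rV[R]_d) (lam : R), 0 <= lam <= 1 ->
    (Order.min (F x1) (F x2) <= F ((lam *: x1 + (1 - lam) *: x2)%R))%E.

(* Main.v *)
Require Import Defs.
From HB Require Import structures.
From mathcomp Require Import all_boot all_order all_algebra.
From mathcomp Require Import all_classical all_reals all_analysis.
From mathcomp Require Import ring lra.
Local Notation edist := Defs.edist.
Import Order.TTheory GRing.Theory Num.Theory.
Local Open Scope ring_scope.

Section Aux.
Variables (R : realType) (d : nat).

Lemma sqdist_conv (x1 x2 p : 'rV[R]_d) (lam : R) : 0 <= lam <= 1 ->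
  \sum_(i < d) ((lam *: x1 + (1 - lam) *: x2) ord0 i - p ord0 i) ^+ 2 <=
  lam * \sum_(i < d) (x1 ord0 i - p ord0 i) ^+ 2 +
  (1 - lam) * \sum_(i < d) (x2 ord0 i - p ord0 i) ^+ 2.
Proof.
move=> /andP[l0 l1].
rewrite !mulr_sumr -big_split /=; apply: ler_sum => i _.
rewrite !mxE.
set a := x1 ord0 i; set b := x2 ord0 i; set c := p ord0 i.
have : 0 <= lam * (1 - lam) * (a - b) ^+ 2.
  by rewrite mulr_ge0 ?sqr_ge0 // mulr_ge0 // subr_ge0.
move=> H; rewrite -subr_ge0.
have -> : lam * (a - c) ^+ 2 + (1 - lam) * (b - c) ^+ 2 -
  (lam * a + (1 - lam) * b - c) ^+ 2 = lam * (1 - lam) * (a - b) ^+ 2 by ring.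
exact: H.
Qed.

Lemma edist_conv (x1 x2 p : 'rV[R]_d) (lam : R) : 0 <= lam <= 1 ->
  (edist (lam *: x1 + (1 - lam) *: x2) p <= edist x1 p) \/
  (edist (lam *: x1 + (1 - lam) *: x2) p <= edist x2 p).
Proof.
move=> hl; have := sqdist_conv x1 x2 p lam hl.
case/andP: hl => l0 l1.
set S1 := \sum_(i < d) (x1 ord0 i - p ord0 i) ^+ 2.
set S2 := \sum_(i < d) (x2 ord0 i - p ord0 i) ^+ 2.
set Sz := \sum_(i < _) _.
move=> H.
have S10 : 0 <= S1 by rewrite sumr_ge0 // => i _; rewrite sqr_ge0.
have S20 : 0 <= S2 by rewrite sumr_ge0 // => i _; rewrite sqr_ge0.
rewrite /edist -/S1 -/S2 -/Sz.
have [h|h] := leP S2 S1.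
- left; rewrite ler_sqrt //; apply: (le_trans H).
  have : 0 <= (1 - lam) * (S1 - S2) by rewrite mulr_ge0 // subr_ge0.
  move=> h2; rewrite -subr_ge0.
  by have -> : S1 - (lam * S1 + (1 - lam) * S2) = (1 - lam) * (S1 - S2) by ring.
- right; rewrite ler_sqrt //; apply: (le_trans H).
  have : 0 <= lam * (S2 - S1) by rewrite mulr_ge0 // subr_ge0 ltW.
  move=> h2; rewrite -subr_ge0.
  by have -> : S2 - (lam * S1 + (1 - lam) * S2) = lam * (S2 - S1) by ring.
Qed.

Lemma edistC (u v : 'rV[R]_d) : edist u v = edist v u.
Proof.
by rewrite /edist; congr Num.sqrt; apply: eq_bigr => i _; rewrite -sqrrN opprB.
Qed.

Lemma edist_ge0 (u v : 'rV[R]_d) : 0 <= edist u v.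
Proof. exact: sqrtr_ge0. Qed.

Local Open Scope ereal_scope.

Lemma SNR_ge0 alpha xi P (u v : 'rV[R]_d) : (0 < xi)%R -> (0 < P)%R ->
  0 <= SNR alpha xi P u v.
Proof.
move=> x0 P0; rewrite /SNR; case: ifP => // h.
rewrite lee_fin divr_ge0 // ?powR_ge0 // mulr_ge0 // ltW //.
Qed.

Lemma SNR_anti alpha xi P (u v u' v' : 'rV[R]_d) : (0 < xi)%R -> (0 < P)%R ->
  (0 <= alpha)%R -> (edist u v <= edist u' v')%R ->
  SNR alpha xi P u' v' <= SNR alpha xi P u v.
Proof.
move=> x0 P0 a0 hle; rewrite /SNR.
have [h|h] := eqVneq (edist u v) 0%R; first exact: leey.
have e0 : (0 < edist u v)%R by rewrite lt_def h edist_ge0.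
have e'0 : (0 < edist u' v')%R by apply: lt_le_trans hle.
rewrite (gt_eqF e'0) lee_fin.
rewrite ler_pM2l ?mulr_gt0 //.
rewrite lef_pV2 ?posrE ?powR_gt0 //.
by rewrite ge0_ler_powR // ?nnegrE ltW.
Qed.

Lemma esqrt_mono (x y : \bar R) : 0 <= x -> x <= y -> esqrt x <= esqrt y.
Proof.
case: x => [r| |] //; case: y => [r'| |] //=.
- by rewrite lee_fin => r0; rewrite !lee_fin => h; rewrite ler_sqrt // (le_trans r0 h).
- by move=> _ _; rewrite leey.
Qed.

Lemma Ccap_mono (x y : \bar R) : 0 <= x -> x <= y -> Ccap x <= Ccap y.
Proof.
case: x => [r| |] //; case: y => [r'| |] //=.
- rewrite !lee_fin => r0 h.
  rewrite ler_pM2r ?invr_gt0 // ler_ln ?posrE ?lerD2l //.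
  + by rewrite ltr_pwDl.
  + by rewrite ltr_pwDl // (le_trans r0 h).
- by move=> _ _; rewrite leey.
Qed.

Lemma esqrt_ge0 (x : \bar R) : 0 <= esqrt x.
Proof. by case: x => [r| |] //=; rewrite lee_fin sqrtr_ge0. Qed.


End Aux.
Section Main.
Variables (R : realType) (d : nat).
Local Open Scope ereal_scope.

Lemma qc_piece (F G : 'rV[R]_d -> \bar R) (p x1 x2 : 'rV[R]_d) (lam : R) :
  (0 <= lam <= 1)%R ->
  (forall x y, (edist x p <= edist y p)%R -> G y <= G x) ->
  (forall x, F x <= G x) ->
  Order.min (F x1) (F x2) <= G (lam *: x1 + (1 - lam) *: x2)%R.
Proof.
move=> hl Ganti FG.
have [h|h] := @edist_conv R d x1 x2 p lam hl.
- by apply: le_trans (Ganti _ _ h); rewrite ge_min FG.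
- by apply: le_trans (Ganti _ _ h); rewrite ge_min FG orbT.
Qed.

Lemma f_mono (a t t' c : \bar R) : 0 <= a -> 0 <= t -> 0 <= c -> t <= t' ->
  a + t + c * esqrt (a * t) <= a + t' + c * esqrt (a * t').
Proof.
move=> a0 t0 c0 tt; apply: leeD; first by apply: leeD.
apply: lee_wpmul2l => //; apply: esqrt_mono; first exact: mule_ge0.
exact: lee_wpmul2l.
Qed.

Lemma f_ge0 (a t c : \bar R) : 0 <= a -> 0 <= t -> 0 <= c ->
  0 <= a + t + c * esqrt (a * t).
Proof.
move=> a0 t0 c0; rewrite adde_ge0 ?adde_ge0 //; apply: mule_ge0 => //.
exact: esqrt_ge0.
Qed.

End Main.

Theorem theorem4 (R : realType) (d N : nat) (alpha Ps Pr xi_sr : R)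
  (xi_sj xi_rj : 'I_N -> R) (s : 'rV[R]_d) (dst : 'I_N -> 'rV[R]_d) :
  (1 <= d)%N -> (1 <= N)%N -> 2 <= alpha -> 0 < Ps -> 0 < Pr -> 0 < xi_sr ->
  (forall j, 0 < xi_sj j) -> (forall j, 0 < xi_rj j) ->
  (forall j, s != dst j) ->
  forall rho : R, 0 <= rho <= 1 ->
    quasi_concave (R_CS alpha Ps Pr xi_sr xi_sj xi_rj s dst rho).
Proof.
move=> _ _ a2 Ps0 Pr0 xsr0 xsj0 xrj0 _ rho /andP[r0 r1] x1 x2 lam hl.
have a0 : 0 <= alpha by apply: le_trans a2.
have c0 : (0 <= (2 * rho)%:E)%E by rewrite lee_fin mulr_ge0.
have c1 : (0 <= (1 - rho ^+ 2)%:E)%E.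
  by rewrite lee_fin subr_ge0 expr_le1.
set RC := R_CS alpha Ps Pr xi_sr xi_sj xi_rj s dst rho.
have Rle : forall x j, (RC x <= Order.min
   (Ccap (f_j alpha Ps Pr xi_sj xi_rj s dst rho x j))
   (Ccap (g_j alpha Ps xi_sr xi_sj s dst rho x j)))%E.
  move=> x j; rewrite /RC /R_CS.
  exact: (@bigmin_le _ _ _ +oo%E j (fun j => Order.min (Ccap (f_j alpha Ps Pr xi_sj xi_rj s dst rho x j)) (Ccap (g_j alpha Ps xi_sr xi_sj s dst rho x j)))).
rewrite [X in (_ <= X)%E]/RC /R_CS; apply: le_bigmin => [|j _]; first exact: leey.
rewrite le_min; apply/andP; split.
- apply: (@qc_piece R d RC (fun x => Ccap (f_j alpha Ps Pr xi_sj xi_rj s dst rho x j)) (dst j) x1 x2 lam hl).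
  + move=> x y hxy; rewrite /f_j.
    have t0 := @SNR_ge0 R d alpha (xi_rj j) Pr y (dst j) (xrj0 j) Pr0.
    have a1 := @SNR_ge0 R d alpha (xi_sj j) Ps s (dst j) (xsj0 j) Ps0.
    apply: Ccap_mono; first exact: f_ge0.
    apply: f_mono => //.
    exact: SNR_anti.
  + move=> x; apply: le_trans (Rle x j) _; rewrite ge_min; apply/orP; left; exact: lexx.
- apply: (@qc_piece R d RC (fun x => Ccap (g_j alpha Ps xi_sr xi_sj s dst rho x j)) s x1 x2 lam hl).
  + move=> x y hxy; rewrite /g_j.
    have t0 := @SNR_ge0 R d alpha xi_sr Ps s y xsr0 Ps0.
    have a1 := @SNR_ge0 R d alpha (xi_sj j) Ps s (dst j) (xsj0 j) Ps0.
    apply: Ccap_mono; first exact: (mule_ge0 c1 (adde_ge0 a1 t0)).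
    apply: (lee_wpmul2l c1); apply: leeD; first exact: lexx.
    apply: SNR_anti => //.
    by rewrite (@edistC R d s x) (@edistC R d s y).
  + move=> x; apply: le_trans (Rle x j) _; rewrite ge_min; apply/orP; right; exact: lexx.
Qed.
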